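(* Let $Q$ be a groupoid quantale with base locale $A$, and let $G$ be its associated involutive localic graph, consisting of the locales $G_0,G_1,G_2$ and the maps $d,r,i,u,m$ described in the context. Then $G$ is an open localic groupoid.
   Context: Let $A$ be a locale (frame), whose multiplication is $\wedge$. An $A$-$A$-bimodule is a sup-lattice $M$ with actions $(a,m)\mapsto a\triangleright m$ and $(m,a)\mapsto m\triangleleft a$ ($a\in A$, $m\in M$), each preserving arbitrary joins in each variable, such that $1_A\triangleright m=m$, $(a\wedge b)\triangleright m=a\triangleright(b\triangleright m)$, $m\triangleleft 1_A=m$, $m\triangleleft(a\wedge b)=(m\triangleleft a)\triangleleft b$, and $(a\triangleright m)\triangleleft b=a\triangleright(m\triangleleft b)$. An $A$-$A$-quantale is an $A$-$A$-bimodule $Q$ with an associative multiplication $(x,y)\mapsto xy$ preserving arbitrary joins in each variable, such that $(a\triangleright x)y=a\triangleright(xy)$, $(x\triangleleft a)y=x(a\triangleright y)$, $(xy)\triangleleft a=x(y\triangleleft a)$. It is involutive if it has a join-preserving map $x\mapsto x^*$ with $x^{**}=x$, $(xy)^*=y^*x^*$ and $(a\triangleright(x\triangleleft b))^*=b\triangleright(x^*\triangleleft a)$. $1_Q$ is the top of $Q$. A support is a join-preserving map $\varsigma:Q\to A$ with $\varsigma(1_Q)=1_A$, $\varsigma(x)\triangleright y\le xx^*y$ and $\varsigma(x)\triangleright x=x$ for all $x,y\in Q$; it is equivariant if $\varsigma(a\triangleright x)=a\wedge\varsigma(x)$ for all $a\in A,x\in Q$. A based quantal frame is an involutive $A$-$A$-quantale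 whose underlying lattice is a frame and such that $(a\triangleright x)\wedge y=a\triangleright(x\wedge y)$ and $(x\triangleleft a)\wedge y=(x\wedge y)\triangleleft a$. It is reflexive if equipped with a frame homomorphism $\upsilon:Q\to A$ with $\upsilon(a\triangleright 1_Q)=a=\upsilon(1_Q\triangleleft a)$ for all $a\in A$. Let $Q\otimes_A Q$ be the quotient of the sup-lattice tensor product $Q\otimes Q$ by the relations $x\otimes(a\triangleright y)=(x\triangleleft a)\otimes y$; the multiplication factors as a sup-lattice homomorphism $\mu_A:Q\otimes_AQ\to Q$, $x\otimes y\mapsto xy$, and $Q$ is multiplicative if the right adjoint of $\mu_A$ preserves arbitrary joins. $Q$ satisfies the unit laws if $\bigvee_{xy\le a}\upsilon(x)\triangleright y=a$ for all $a\in Q$, and the inverse law if $\upsilon(a)\triangleright 1_Q=\bigvee_{xy^*\le a}x\wedge y$ for all $a\in Q$. A groupoid quantale is a multiplicative, equivariantly supported, reflexive based quantal frame satisfying the unit laws and the inverse law. Its associated involutive localic graph: locales $G_0,G_1$ with $\mathcal O(G_0)=A$, $\mathcal O(G_1)=Q$; $d:G_1\to G_0$ with $d^*(a)=a\triangleright 1_Q$; $i:G_1\to G_1$ with $i^*(x)=x^*$; $r=d\circ i$; $u:G_0\to G_1$ with $u^*=\upsilon$; $G_2$ the pullback of $r$ (via the first projection) and $d$ (via the second), with $\mathcal O(G_2)=Q\otimes_AQ$; and $m:G_2\to G_1$ with $m^*(a)=\bigvee_{xy\le a}x\otimes y$. A localic groupoid is open if $d$ is an open map. *)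

(* Defs.v *)
(* Locales are represented by their frames of opens; a locale map f : X -> Y
   is represented by its inverse-image frame homomorphism f^* : O(Y) -> O(X). *)

Record frame_ops := FrameOps {
  fcar :> Type;
  fle : fcar -> fcar -> Prop;
  fsup : (fcar -> Prop) -> fcar;
  fmeet : fcar -> fcar -> fcar;
  ftop : fcar }.

Definition image {X Y : Type} (f : X -> Y) (P : X -> Prop) : Y -> Prop :=
  fun y => exists x, P x /\ y = f x.

Record is_frame (F : frame_ops) : Prop := {
  fr_refl : forall x, fle F x x;
  fr_trans : forall x y z, fle F x y -> fle F y z -> fle F x z;
  fr_antisym : forall x y, fle F x y -> fle F y x -> x = y;
  fr_sup_ub : forall (P : F -> Prop) x, P x -> fle F x (fsup F P);
  fr_sup_least : forall (P : F -> Prop) u, (forall x, P x -> fle F x u) -> fle F (fsup F P) u;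
  fr_meet_l : forall x y, fle F (fmeet F x y) x;
  fr_meet_r : forall x y, fle F (fmeet F x y) y;
  fr_meet_glb : forall x y z, fle F z x -> fle F z y -> fle F z (fmeet F x y);
  fr_top : forall x, fle F x (ftop F);
  fr_distr : forall x (P : F -> Prop),
      fmeet F x (fsup F P) = fsup F (image (fmeet F x) P) }.

Definition sup_pres (F G : frame_ops) (f : F -> G) : Prop :=
  forall P : F -> Prop, f (fsup F P) = fsup G (image f P).

Record frame_hom (F G : frame_ops) (f : F -> G) : Prop := {
  fh_sup : sup_pres F G f;
  fh_meet : forall x y, f (fmeet F x y) = fmeet G (f x) (f y);
  fh_top : f (ftop F) = ftop G }.

Section Quantales.
Variables (A Q : frame_ops).
Variables (la : A -> Q -> Q) (ra : Q -> A -> Q) (mul : Q -> Q -> Q)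
          (inv : Q -> Q) (ups : Q -> A).

Record bimodule : Prop := {
  bm_la_supl : forall (P : A -> Prop) m, la (fsup A P) m = fsup Q (image (fun a => la a m) P);
  bm_la_supr : forall a (P : Q -> Prop), la a (fsup Q P) = fsup Q (image (la a) P);
  bm_ra_supl : forall (P : Q -> Prop) a, ra (fsup Q P) a = fsup Q (image (fun m => ra m a) P);
  bm_ra_supr : forall m (P : A -> Prop), ra m (fsup A P) = fsup Q (image (ra m) P);
  bm_la_one : forall m, la (ftop A) m = m;
  bm_la_meet : forall a b m, la (fmeet A a b) m = la a (la b m);
  bm_ra_one : forall m, ra m (ftop A) = m;
  bm_ra_meet : forall m a b, ra m (fmeet A a b) = ra (ra m a) b;
  bm_assoc : forall a m b, ra (la a m) b = la a (ra m b) }.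

Record quantale : Prop := {
  q_bimodule : bimodule;
  q_assoc : forall x y z, mul (mul x y) z = mul x (mul y z);
  q_supl : forall (P : Q -> Prop) y, mul (fsup Q P) y = fsup Q (image (fun x => mul x y) P);
  q_supr : forall x (P : Q -> Prop), mul x (fsup Q P) = fsup Q (image (mul x) P);
  q_la : forall a x y, mul (la a x) y = la a (mul x y);
  q_mid : forall x a y, mul (ra x a) y = mul x (la a y);
  q_ra : forall x y a, ra (mul x y) a = mul x (ra y a) }.

Record involutive : Prop := {
  inv_sup : sup_pres Q Q inv;
  inv_inv : forall x, inv (inv x) = x;
  inv_mul : forall x y, inv (mul x y) = mul (inv y) (inv x);
  inv_act : forall a x b, inv (la a (ra x b)) = la b (ra (inv x) a) }.

Record based_quantal_frame : Prop := {
  bq_frameA : is_frame A;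
  bq_frameQ : is_frame Q;
  bq_quantale : quantale;
  bq_involutive : involutive;
  bq_la_meet : forall a x y, fmeet Q (la a x) y = la a (fmeet Q x y);
  bq_ra_meet : forall x a y, fmeet Q (ra x a) y = ra (fmeet Q x y) a }.

Record support (sg : Q -> A) : Prop := {
  sp_sup : sup_pres Q A sg;
  sp_top : sg (ftop Q) = ftop A;
  sp_le : forall x y, fle Q (la (sg x) y) (mul (mul x (inv x)) y);
  sp_fix : forall x, la (sg x) x = x }.

Definition equivariant (sg : Q -> A) : Prop :=
  forall a x, sg (la a x) = fmeet A a (sg x).

Definition reflexive : Prop :=
  frame_hom Q A ups /\
  (forall a, ups (la a (ftop Q)) = a) /\ (forall a, ups (ra (ftop Q) a) = a).

(* ---- the sup-lattice Q (x)_A Q, as the lattice of "A-balanced tensor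
   ideals" of Q x Q (the standard presentation of the tensor product of
   sup-lattices, quotiented by x (x) (a |> y) = (x <| a) (x) y) ---- *)

Definition tideal (S : Q -> Q -> Prop) : Prop :=
  (forall x y x' y', S x y -> fle Q x' x -> fle Q y' y -> S x' y') /\
  (forall (P : Q -> Prop) y, (forall x, P x -> S x y) -> S (fsup Q P) y) /\
  (forall x (P : Q -> Prop), (forall y, P y -> S x y) -> S x (fsup Q P)) /\
  (forall x a y, S x (la a y) <-> S (ra x a) y).

Definition tint (C : (Q -> Q -> Prop) -> Prop) : Q -> Q -> Prop :=
  fun x y => forall R, C R -> tideal R -> R x y.

Lemma tint_ideal C : tideal (tint C).
Proof.
  unfold tideal, tint; split; [|split; [|split]].
  - intros x y x' y' H Hx Hy R HC HR.
    pose proof HR as HR'. destruct HR as [Hd _]. exact (Hd x y x' y' (H R HC HR') Hx Hy).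
  - intros P y H R HC HR. pose proof HR as HR'.
    destruct HR as [_ [Hl _]]. apply Hl. intros x Px. exact (H x Px R HC HR').
  - intros x P H R HC HR. pose proof HR as HR'.
    destruct HR as [_ [_ [Hr _]]]. apply Hr. intros y Py. exact (H y Py R HC HR').
  - intros x a y; split; intros H R HC HR; pose proof HR as HR';
      destruct HR as [_ [_ [_ Ha]]]; apply Ha; exact (H R HC HR').
Qed.

Definition tcar : Type := { S : Q -> Q -> Prop | tideal S }.

Definition tmk (C : (Q -> Q -> Prop) -> Prop) : tcar :=
  exist _ (tint C) (tint_ideal C).

Definition tle (S T : tcar) : Prop :=
  forall x y, proj1_sig S x y -> proj1_sig T x y.

Definition tsup (F : tcar -> Prop) : tcar :=
  tmk (fun R => forall S, F S -> forall x y, proj1_sig S x y -> R x y).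

Definition tmeet (S T : tcar) : tcar :=
  tmk (fun R => R = proj1_sig S \/ R = proj1_sig T).

Definition ttop : tcar := tmk (fun _ => False).

Definition tensor_frame : frame_ops := FrameOps tcar tle tsup tmeet ttop.

Definition tens (x y : Q) : tcar := tmk (fun R => R x y).

Definition mu_A (S : tcar) : Q :=
  fsup Q (fun z => exists x y, proj1_sig S x y /\ z = mul x y).

Definition mu_right (a : Q) : tcar := tsup (fun t => fle Q (mu_A t) a).

Definition multiplicative : Prop :=
  sup_pres Q tensor_frame mu_right.

Definition unit_laws : Prop :=
  forall a, fsup Q (fun z => exists x y, fle Q (mul x y) a /\ z = la (ups x) y) = a.

Definition inverse_law : Prop :=
  forall a, la (ups a) (ftop Q) =
            fsup Q (fun z => exists x y, fle Q (mul x (inv y)) a /\ z = fmeet Q x y).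

Definition groupoid_quantale : Prop :=
  based_quantal_frame /\ multiplicative /\
  (exists sg, support sg /\ equivariant sg) /\
  reflexive /\ unit_laws /\ inverse_law.

Definition dstar (a : A) : Q := la a (ftop Q).
Definition rstar (a : A) : Q := inv (dstar a).          (* r^* = (d o i)^* = i^* o d^* *)
Definition pi1 (x : Q) : tcar := tens x (ftop Q).
Definition pi2 (y : Q) : tcar := tens (ftop Q) y.
Definition mstar (a : Q) : tcar :=
  tsup (fun t => exists x y, fle Q (mul x y) a /\ t = tens x y).

End Quantales.

(* (G2, p1, p2) is the pullback in Loc of r : G1 -> G0 (via p1) and
   d : G1 -> G0 (via p2); stated on frames: pushout in Frm. *)
Definition is_pullback (G0 G1 G2 : frame_ops) (rs ds : G0 -> G1) (p1 p2 : G1 -> G2) : Prop :=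
  (forall a, p1 (rs a) = p2 (ds a)) /\
  forall (X : frame_ops), is_frame X ->
  forall (f g : G1 -> X), frame_hom G1 X f -> frame_hom G1 X g ->
  (forall a, f (rs a) = g (ds a)) ->
  exists h : G2 -> X, frame_hom G2 X h /\
    (forall q, h (p1 q) = f q) /\ (forall q, h (p2 q) = g q) /\
    (forall h' : G2 -> X, frame_hom G2 X h' ->
       (forall q, h' (p1 q) = f q) -> (forall q, h' (p2 q) = g q) ->
       forall t, h' t = h t).

(* Axioms involving composable
   pairs are stated on generalized elements X -> G1 (frame homs G1 -> X),
   pairings <x,y> : X -> G2 being the maps h with h o p1^* = x^*, h o p2^* = y^*. *)
Record localic_groupoid (G0 G1 G2 : frame_ops) (ds rs : G0 -> G1) (us : G1 -> G0)
    (is_ : G1 -> G1) (ms p1 p2 : G1 -> G2) : Prop := {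
  lg_frame0 : is_frame G0;
  lg_frame1 : is_frame G1;
  lg_frame2 : is_frame G2;
  lg_hom_d : frame_hom G0 G1 ds;
  lg_hom_r : frame_hom G0 G1 rs;
  lg_hom_u : frame_hom G1 G0 us;
  lg_hom_i : frame_hom G1 G1 is_;
  lg_hom_m : frame_hom G1 G2 ms;
  lg_hom_p1 : frame_hom G1 G2 p1;
  lg_hom_p2 : frame_hom G1 G2 p2;
  lg_pullback : is_pullback G0 G1 G2 rs ds p1 p2;
  (* d o u = id, r o u = id, i o i = id, r = d o i *)
  lg_du : forall a, us (ds a) = a;
  lg_ru : forall a, us (rs a) = a;
  lg_ii : forall x, is_ (is_ x) = x;
  lg_di : forall a, is_ (ds a) = rs a;
  (* d o m = d o p1, r o m = r o p2 *)
  lg_dm : forall a, ms (ds a) = p1 (ds a);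
  lg_rm : forall a, ms (rs a) = p2 (rs a);
  (* associativity: m(m(x,y),z) = m(x,m(y,z)) *)
  lg_assoc : forall X, is_frame X ->
    forall x y z : G1 -> X, frame_hom G1 X x -> frame_hom G1 X y -> frame_hom G1 X z ->
    forall h1 h2 h3 h4 : G2 -> X,
      frame_hom G2 X h1 -> frame_hom G2 X h2 -> frame_hom G2 X h3 -> frame_hom G2 X h4 ->
      (forall q, h1 (p1 q) = x q) -> (forall q, h1 (p2 q) = y q) ->
      (forall q, h2 (p1 q) = y q) -> (forall q, h2 (p2 q) = z q) ->
      (forall q, h3 (p1 q) = h1 (ms q)) -> (forall q, h3 (p2 q) = z q) ->
      (forall q, h4 (p1 q) = x q) -> (forall q, h4 (p2 q) = h2 (ms q)) ->
      forall q, h3 (ms q) = h4 (ms q);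
  (* left unit: m(u(d x), x) = x *)
  lg_unit_l : forall X, is_frame X -> forall x : G1 -> X, frame_hom G1 X x ->
    forall h : G2 -> X, frame_hom G2 X h ->
      (forall q, h (p1 q) = x (ds (us q))) -> (forall q, h (p2 q) = x q) ->
      forall q, h (ms q) = x q;
  (* right unit: m(x, u(r x)) = x *)
  lg_unit_r : forall X, is_frame X -> forall x : G1 -> X, frame_hom G1 X x ->
    forall h : G2 -> X, frame_hom G2 X h ->
      (forall q, h (p1 q) = x q) -> (forall q, h (p2 q) = x (rs (us q))) ->
      forall q, h (ms q) = x q;
  (* m(x, i x) = u(d x) *)
  lg_inv_r : forall X, is_frame X -> forall x : G1 -> X, frame_hom G1 X x ->
    forall h : G2 -> X, frame_hom G2 X h ->
      (forall q, h (p1 q) = x q) -> (forall q, h (p2 q) = x (is_ q)) ->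
      forall q, h (ms q) = x (ds (us q));
  (* m(i x, x) = u(r x) *)
  lg_inv_l : forall X, is_frame X -> forall x : G1 -> X, frame_hom G1 X x ->
    forall h : G2 -> X, frame_hom G2 X h ->
      (forall q, h (p1 q) = x (is_ q)) -> (forall q, h (p2 q) = x q) ->
      forall q, h (ms q) = x (rs (us q)) }.

Definition open_map (X Y : frame_ops) (fs : X -> Y) : Prop :=
  exists l : Y -> X,
    (forall y x, fle X (l y) x <-> fle Y y (fs x)) /\
    (forall y x, l (fmeet Y y (fs x)) = fmeet X (l y) x).

Definition open_localic_groupoid (G0 G1 G2 : frame_ops) (ds rs : G0 -> G1) (us : G1 -> G0)
    (is_ : G1 -> G1) (ms p1 p2 : G1 -> G2) : Prop :=
  localic_groupoid G0 G1 G2 ds rs us is_ ms p1 p2 /\ open_map G0 G1 ds.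

(* Main.v *)
Require Import Defs.
From Stdlib Require Import FunctionalExtensionality PropExtensionality ProofIrrelevance.

Section FrameLemmas.
Variable F : frame_ops.
Hypothesis HF : is_frame F.

Lemma le_refl x : fle F x x. Proof. exact (fr_refl F HF x). Qed.
Lemma le_trans x y z : fle F x y -> fle F y z -> fle F x z. Proof. exact (fr_trans F HF x y z). Qed.
Lemma le_antisym x y : fle F x y -> fle F y x -> x = y. Proof. exact (fr_antisym F HF x y). Qed.
Lemma sup_ub (P : F -> Prop) x : P x -> fle F x (fsup F P). Proof. exact (fr_sup_ub F HF P x). Qed.
Lemma sup_least (P : F -> Prop) u : (forall x, P x -> fle F x u) -> fle F (fsup F P) u.
Proof. exact (fr_sup_least F HF P u). Qed.
Lemma meet_l x y : fle F (fmeet F x y) x. Proof. exact (fr_meet_l F HF x y). Qed.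
Lemma meet_r x y : fle F (fmeet F x y) y. Proof. exact (fr_meet_r F HF x y). Qed.
Lemma meet_glb x y z : fle F z x -> fle F z y -> fle F z (fmeet F x y).
Proof. exact (fr_meet_glb F HF x y z). Qed.
Lemma top_ge x : fle F x (ftop F). Proof. exact (fr_top F HF x). Qed.

Lemma meet_comm x y : fmeet F x y = fmeet F y x.
Proof. apply le_antisym; apply meet_glb; (apply meet_l || apply meet_r). Qed.

Lemma meet_mono x x' y y' : fle F x x' -> fle F y y' -> fle F (fmeet F x y) (fmeet F x' y').
Proof. intros. apply meet_glb; [eapply le_trans; [apply meet_l|]|eapply le_trans; [apply meet_r|]]; auto. Qed.

Lemma meet_assoc x y z : fmeet F (fmeet F x y) z = fmeet F x (fmeet F y z).
Proof.
  apply le_antisym; repeat apply meet_glb;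
  eauto using le_trans, meet_l, meet_r.
Qed.

Lemma meet_eq_l x y : fle F x y -> fmeet F x y = x.
Proof. intros. apply le_antisym. apply meet_l. apply meet_glb; auto using le_refl. Qed.
Lemma meet_eq_r x y : fle F x y -> fmeet F y x = x.
Proof. intros. rewrite meet_comm. now apply meet_eq_l. Qed.
Lemma meet_top_l x : fmeet F (ftop F) x = x. Proof. apply meet_eq_r, top_ge. Qed.
Lemma meet_top_r x : fmeet F x (ftop F) = x. Proof. apply meet_eq_l, top_ge. Qed.
Lemma meet_idem x : fmeet F x x = x. Proof. apply meet_eq_l, le_refl. Qed.

Lemma meet_sup_le (P : F -> Prop) x W :
  (forall p, P p -> fle F (fmeet F x p) W) -> fle F (fmeet F x (fsup F P)) W.
Proof.
  intros H. rewrite (fr_distr F HF). apply sup_least. intros z [p [Hp ->]]. auto.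
Qed.
Lemma sup_meet_le (P : F -> Prop) x W :
  (forall p, P p -> fle F (fmeet F p x) W) -> fle F (fmeet F (fsup F P) x) W.
Proof.
  intros H. rewrite meet_comm. apply meet_sup_le. intros p Hp. rewrite meet_comm; auto.
Qed.

Lemma sup_mono (P P' : F -> Prop) :
  (forall p, P p -> exists p', P' p' /\ fle F p p') -> fle F (fsup F P) (fsup F P').
Proof.
  intros H. apply sup_least. intros p Hp. destruct (H p Hp) as [p' [H1 H2]].
  eapply le_trans; [exact H2|]. now apply sup_ub.
Qed.

Lemma sup_ext (P P' : F -> Prop) : (forall z, P z <-> P' z) -> fsup F P = fsup F P'.
Proof.
  intros H. apply le_antisym; apply sup_mono; intros p Hp; exists p; split;
  try apply H; auto using le_refl.
Qed.

Lemma sup_pair x y : fle F x y -> fsup F (fun z => z = x \/ z = y) = y.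
Proof.
  intros H. apply le_antisym. apply sup_least. intros z [->| ->]; auto using le_refl.
  apply sup_ub. auto.
Qed.

End FrameLemmas.

Lemma sup_pres_mono (F G : frame_ops) (f : F -> G) :
  is_frame F -> is_frame G -> sup_pres F G f ->
  forall x y, fle F x y -> fle G (f x) (f y).
Proof.
  intros HF HG Hf x y H. rewrite <- (sup_pair F HF x y H). rewrite Hf.
  apply sup_ub; auto. exists x. auto.
Qed.

Lemma frame_hom_mono (F G : frame_ops) (f : F -> G) :
  is_frame F -> is_frame G -> frame_hom F G f ->
  forall x y, fle F x y -> fle G (f x) (f y).
Proof. intros HF HG Hf. apply sup_pres_mono; auto. apply Hf. Qed.

Lemma frame_hom_comp (F G H : frame_ops) (f : F -> G) (g : G -> H) :
  frame_hom F G f -> frame_hom G H g -> frame_hom F H (fun x => g (f x)).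
Proof.
  intros [f1 f2 f3] [g1 g2 g3]. split.
  - intros P. rewrite f1, g1. f_equal. apply functional_extensionality. intro z.
    apply propositional_extensionality. split.
    + intros [y [[x [Hx ->]] ->]]. exists x; auto.
    + intros [x [Hx ->]]. exists (f x). split; auto. exists x; auto.
  - intros. rewrite f2, g2. auto.
  - rewrite f3, g3. auto.
Qed.

Section Main.
Variables (A Q : frame_ops) (la : A -> Q -> Q) (ra : Q -> A -> Q) (mul : Q -> Q -> Q)
          (inv : Q -> Q) (ups : Q -> A).
Hypothesis HG : groupoid_quantale A Q la ra mul inv ups.

Lemma HA : is_frame A. Proof. destruct HG as [[H _ _ _ _ _] _]; exact H. Qed.
Lemma HQ : is_frame Q. Proof. destruct HG as [[_ H _ _ _ _] _]; exact H. Qed.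
Lemma Hq : quantale A Q la ra mul. Proof. destruct HG as [[_ _ H _ _ _] _]; exact H. Qed.
Lemma Hbm : bimodule A Q la ra. Proof. destruct Hq as [H _ _ _ _ _ _]; exact H. Qed.
Lemma Hinv : involutive A Q la ra mul inv. Proof. destruct HG as [[_ _ _ H _ _] _]; exact H. Qed.
Lemma la_meetQ a x y : fmeet Q (la a x) y = la a (fmeet Q x y). Proof. destruct HG as [[_ _ _ _ H _] _]; apply H. Qed.
Lemma ra_meetQ x a y : fmeet Q (ra x a) y = ra (fmeet Q x y) a. Proof. destruct HG as [[_ _ _ _ _ H] _]; apply H. Qed.
Lemma Hmult : multiplicative A Q la ra mul. Proof. destruct HG as [_ [H _]]; exact H. Qed.
Lemma Hrefl : reflexive A Q la ra ups. Proof. destruct HG as [_ [_ [_ [H _]]]]; exact H. Qed.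
Lemma Hunit : unit_laws A Q la mul ups. Proof. destruct HG as [_ [_ [_ [_ [H _]]]]]; exact H. Qed.
Lemma Hinvlaw : inverse_law A Q la mul inv ups. Proof. destruct HG as [_ [_ [_ [_ [_ H]]]]]; exact H. Qed.

Notation le := (fle Q).
Notation top := (ftop Q).
Notation meet := (fmeet Q).

Lemma la_mono_l a b m : fle A a b -> le (la a m) (la b m).
Proof. apply (sup_pres_mono A Q (fun a => la a m) HA HQ). intro P. apply Hbm. Qed.
Lemma la_mono_r a m n : le m n -> le (la a m) (la a n).
Proof. apply (sup_pres_mono Q Q (la a) HQ HQ). intro P. apply Hbm. Qed.
Lemma ra_mono_l a m n : le m n -> le (ra m a) (ra n a).
Proof. apply (sup_pres_mono Q Q (fun m => ra m a) HQ HQ). intro P. apply Hbm. Qed.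
Lemma ra_mono_r a b m : fle A a b -> le (ra m a) (ra m b).
Proof. apply (sup_pres_mono A Q (ra m) HA HQ). intro P. apply Hbm. Qed.
Lemma mul_mono_l x x' y : le x x' -> le (mul x y) (mul x' y).
Proof. apply (sup_pres_mono Q Q (fun x => mul x y) HQ HQ). intro P. apply Hq. Qed.
Lemma mul_mono_r x y y' : le y y' -> le (mul x y) (mul x y').
Proof. apply (sup_pres_mono Q Q (mul x) HQ HQ). intro P. apply Hq. Qed.
Lemma mul_mono x x' y y' : le x x' -> le y y' -> le (mul x y) (mul x' y').
Proof. intros. eapply le_trans. exact HQ. apply mul_mono_l; eauto. apply mul_mono_r; auto. Qed.

Lemma inv_mono x y : le x y -> le (inv x) (inv y).
Proof. apply (sup_pres_mono Q Q inv HQ HQ). apply Hinv. Qed.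
Lemma inv_inv x : inv (inv x) = x. Proof. apply Hinv. Qed.
Lemma inv_mul x y : inv (mul x y) = mul (inv y) (inv x). Proof. apply Hinv. Qed.
Lemma inv_le_iff x y : le (inv x) (inv y) <-> le x y.
Proof. split; [|apply inv_mono]. intros H. rewrite <- (inv_inv x), <- (inv_inv y). now apply inv_mono. Qed.
Lemma inv_le_l x y : le (inv x) y <-> le x (inv y).
Proof. rewrite <- (inv_inv y) at 1. apply inv_le_iff. Qed.
Lemma inv_top : inv top = top.
Proof.
  apply (le_antisym Q HQ). apply (top_ge Q HQ). apply inv_le_l. apply (top_ge Q HQ).
Qed.
Lemma inv_meet x y : inv (meet x y) = meet (inv x) (inv y).
Proof.
  apply (le_antisym Q HQ).
  - apply meet_glb. exact HQ. apply inv_mono, meet_l, HQ. apply inv_mono, meet_r, HQ.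
  - apply inv_le_l. apply meet_glb. exact HQ.
    + apply inv_le_l. apply (meet_l Q HQ).
    + apply inv_le_l. apply (meet_r Q HQ).
Qed.

Lemma la_one m : la (ftop A) m = m. Proof. apply Hbm. Qed.
Lemma ra_one m : ra m (ftop A) = m. Proof. apply Hbm. Qed.

Lemma inv_la c w : inv (la c w) = ra (inv w) c.
Proof.
  pose proof (inv_act _ _ _ _ _ _ Hinv c w (ftop A)) as H.
  rewrite ra_one, la_one in H. exact H.
Qed.
Lemma inv_ra w c : inv (ra w c) = la c (inv w).
Proof.
  pose proof (inv_act _ _ _ _ _ _ Hinv (ftop A) w c) as H.
  rewrite ra_one, la_one in H. exact H.
Qed.
Lemma la_top_meet a y : meet (la a top) y = la a y.
Proof. rewrite la_meetQ. now rewrite (meet_top_l Q HQ). Qed.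
Lemma ra_top_meet a y : meet (ra top a) y = ra y a.
Proof. rewrite ra_meetQ. now rewrite (meet_top_l Q HQ). Qed.
Lemma rstar_eq a : rstar A Q la inv a = ra top a.
Proof. unfold rstar, dstar. now rewrite inv_la, inv_top. Qed.

Lemma ups_la a : ups (la a top) = a. Proof. apply Hrefl. Qed.

Lemma ups_inv b : ups (inv b) = ups b.
Proof.
  rewrite <- (ups_la (ups (inv b))), <- (ups_la (ups b)). f_equal.
  rewrite !Hinvlaw. apply sup_ext. exact HQ. intro z. split.
  - intros [x [y [H ->]]]. exists y, x. split.
    + apply inv_le_l in H. rewrite inv_mul, inv_inv in H. exact H.
    + apply meet_comm, HQ.
  - intros [x [y [H ->]]]. exists y, x. split.
    + apply inv_le_l. rewrite inv_mul, inv_inv. exact H.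
    + apply meet_comm, HQ.
Qed.


Notation T := (tcar A Q la ra).
Notation mem S := (proj1_sig S).
Notation tid := (tideal A Q la ra).

Lemma td_down R : tid R -> forall x y x' y', R x y -> le x' x -> le y' y -> R x' y'.
Proof. intros [H _]. exact H. Qed.
Lemma td_supl R : tid R -> forall (P : Q -> Prop) y, (forall x, P x -> R x y) -> R (fsup Q P) y.
Proof. intros [_ [H _]]. exact H. Qed.
Lemma td_supr R : tid R -> forall x (P : Q -> Prop), (forall y, P y -> R x y) -> R x (fsup Q P).
Proof. intros [_ [_ [H _]]]. exact H. Qed.
Lemma td_bal R : tid R -> forall x a y, R x (la a y) <-> R (ra x a) y.
Proof. intros [_ [_ [_ H]]]. exact H. Qed.

Lemma mem_id (S : T) : tid (mem S). Proof. exact (proj2_sig S). Qed.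

Lemma tcar_ext (S S' : T) : (forall x y, mem S x y <-> mem S' x y) -> S = S'.
Proof.
  destruct S as [s hs], S' as [t ht]. simpl. intros H.
  assert (s = t) as E.
  { apply functional_extensionality; intro x. apply functional_extensionality; intro y.
    apply propositional_extensionality. apply H. }
  subst t. f_equal. apply proof_irrelevance.
Qed.

Lemma tens_in x y : mem (tens A Q la ra x y) x y.
Proof. simpl. unfold tint. intros R HR _. exact HR. Qed.
Lemma tens_least R x y : tid R -> R x y -> forall a b, mem (tens A Q la ra x y) a b -> R a b.
Proof. intros HR Hxy a b H. exact (H R Hxy HR). Qed.
Lemma tsup_in (F : T -> Prop) S x y : F S -> mem S x y -> mem (tsup A Q la ra F) x y.
Proof. intros HS Hm. simpl. unfold tint. intros R HR _. exact (HR S HS x y Hm). Qed.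
Lemma tsup_least (F : T -> Prop) R : tid R -> (forall S, F S -> forall x y, mem S x y -> R x y) ->
  forall x y, mem (tsup A Q la ra F) x y -> R x y.
Proof. intros HR H x y Hm. exact (Hm R H HR). Qed.
Lemma tmeet_iff S S' x y : mem (tmeet A Q la ra S S') x y <-> mem S x y /\ mem S' x y.
Proof.
  simpl. unfold tint. split.
  - intros H. split; apply H; auto using mem_id.
  - intros [H1 H2] R [-> | ->] _; auto.
Qed.
Lemma ttop_in x y : mem (ttop A Q la ra) x y.
Proof. simpl. unfold tint. intros R []. Qed.

Lemma restr_ideal R x y : tid R -> tid (fun a b => R (meet a x) (meet b y)).
Proof.
  intros HR. split; [|split; [|split]].
  - intros a b a' b' H Ha Hb. eapply td_down; eauto; apply meet_mono; auto using le_refl, HQ.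
  - intros P b H. rewrite (meet_comm Q HQ), (fr_distr Q HQ). apply td_supl; auto.
    intros z [p [Hp ->]]. rewrite (meet_comm Q HQ). auto.
  - intros a P H. rewrite (meet_comm Q HQ (fsup Q P)), (fr_distr Q HQ). apply td_supr; auto.
    intros z [p [Hp ->]]. rewrite (meet_comm Q HQ y p). auto.
  - intros a c b. rewrite la_meetQ, (td_bal R HR), ra_meetQ. tauto.
Qed.

Definition imp (S S' : Q -> Q -> Prop) : Q -> Q -> Prop :=
  fun a b => forall a' b', le a' a -> le b' b -> S a' b' -> S' a' b'.

Lemma imp_ideal S S' : tid S -> tid S' -> tid (imp S S').
Proof.
  intros HS HS'. unfold imp. split; [|split; [|split]].
  - intros a b a0 b0 H Ha Hb a' b' Ha' Hb' Hs. apply H; auto; eapply le_trans; eauto; exact HQ.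
  - intros P b H a' b' Ha' Hb' Hs.
    rewrite <- (meet_eq_l Q HQ a' (fsup Q P) Ha'), (fr_distr Q HQ).
    apply td_supl; auto. intros z [p [Hp ->]]. apply (H p Hp); auto.
    apply (meet_r Q HQ). eapply td_down; eauto. apply (meet_l Q HQ). apply (le_refl Q HQ).
  - intros a P H a' b' Ha' Hb' Hs.
    rewrite <- (meet_eq_l Q HQ b' (fsup Q P) Hb'), (fr_distr Q HQ).
    apply td_supr; auto. intros z [p [Hp ->]]. apply (H p Hp); auto.
    apply (meet_r Q HQ). eapply td_down; eauto. apply (le_refl Q HQ). apply (meet_l Q HQ).
  - intros a c b. split.
    + intros H a' b' Ha' Hb' Hs.
      assert (E : ra a' c = a').
      { rewrite <- ra_top_meet. apply meet_eq_r. exact HQ. eapply le_trans. exact HQ. exact Ha'.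
        apply ra_mono_l, top_ge, HQ. }
      rewrite <- E. apply (td_bal S' HS'). apply H.
      * eapply le_trans. exact HQ. exact Ha'. rewrite <- ra_top_meet. apply (meet_r Q HQ).
      * apply la_mono_r; auto.
      * apply (td_bal S HS). rewrite E. exact Hs.
    + intros H a' b' Ha' Hb' Hs.
      assert (E : la c (meet b b') = b').
      { rewrite <- la_meetQ. apply meet_eq_r. exact HQ. exact Hb'. }
      rewrite <- E. apply (td_bal S' HS'). apply H.
      * apply ra_mono_l; auto.
      * apply (meet_l Q HQ).
      * apply (td_bal S HS). rewrite E. exact Hs.
Qed.

Lemma tens_meet x y x' y' a b :
  mem (tens A Q la ra x y) a b -> mem (tens A Q la ra x' y') a b ->
  mem (tens A Q la ra (meet x x') (meet y y')) a b.
Proof.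
  set (U := tens A Q la ra (meet x x') (meet y y')).
  assert (S1 : forall a b, mem (tens A Q la ra x' y') a b -> mem U (meet a x) (meet b y)).
  { intros a0 b0. apply (tens_least (fun a b => mem U (meet a x) (meet b y))).
    apply restr_ideal, mem_id.
    rewrite (meet_comm Q HQ x'), (meet_comm Q HQ y'). apply tens_in. }
  intros H1 H2.
  refine (tens_least (imp (mem (tens A Q la ra x' y')) (mem U)) x y _ _ a b H1 _ _ _ _ H2);
    try apply (le_refl Q HQ).
  - apply imp_ideal; apply mem_id.
  - intros a' b' Ha Hb Hs. pose proof (S1 _ _ Hs) as K.
    rewrite (meet_eq_l Q HQ _ _ Ha), (meet_eq_l Q HQ _ _ Hb) in K. exact K.
Qed.


Notation TF := (tensor_frame A Q la ra).

Ltac tfs := unfold tensor_frame in *; cbn [fle fsup fmeet ftop fcar] in *.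

Lemma tframe : is_frame TF.
Proof.
  split; tfs; unfold tle.
  - auto.
  - auto.
  - intros x y H1 H2. apply tcar_ext. split; auto.
  - intros P x HP a b H. eapply tsup_in; eauto.
  - intros P u H a b Hm. refine (tsup_least P (mem u) (mem_id u) _ a b Hm). exact H.
  - intros x y a b H. apply tmeet_iff in H. tauto.
  - intros x y a b H. apply tmeet_iff in H. tauto.
  - intros x y z H1 H2 a b H. apply tmeet_iff. auto.
  - intros x a b _. apply ttop_in.
  - intros S F. apply tcar_ext. intros a b. split.
    + intros H. apply tmeet_iff in H. destruct H as [H1 H2].
      set (V := tsup A Q la ra (image (tmeet A Q la ra S) F)).
      refine (tsup_least F (imp (mem S) (mem V)) _ _ a b H2 a b _ _ H1);
        try apply (le_refl Q HQ).
      * apply imp_ideal; apply mem_id.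
      * intros S' HS' x y Hxy a' b' Ha Hb Hs. eapply tsup_in.
        exists S'. split. exact HS'. reflexivity.
        apply tmeet_iff. split. exact Hs. eapply td_down. apply mem_id. exact Hxy. exact Ha. exact Hb.
    + apply tsup_least. apply mem_id.
      intros S' [S'' [HS'' ->]] x y H. apply tmeet_iff in H. destruct H as [H1 H2].
      apply tmeet_iff. split. exact H1. eapply tsup_in; eauto.
Qed.


Notation tens' := (tens A Q la ra).

Lemma tens_mono x y x' y' a b : le x x' -> le y y' -> mem (tens' x y) a b -> mem (tens' x' y') a b.
Proof.
  intros H1 H2. apply tens_least. apply mem_id.
  eapply td_down. apply mem_id. apply tens_in. exact H1. exact H2.
Qed.
Lemma tens_top_all a b : mem (tens' top top) a b.
Proof. eapply td_down. apply mem_id. apply tens_in. apply (top_ge Q HQ). apply (top_ge Q HQ). Qed.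

Lemma tens_split x y : tens' x y = tmeet A Q la ra (tens' x top) (tens' top y).
Proof.
  apply tcar_ext. intros a b. rewrite tmeet_iff. split.
  - intros H. split; eapply tens_mono; eauto; try apply (le_refl Q HQ); apply (top_ge Q HQ).
  - intros [H1 H2]. pose proof (tens_meet _ _ _ _ _ _ H1 H2) as K.
    rewrite (meet_top_r Q HQ), (meet_top_l Q HQ) in K. exact K.
Qed.

Lemma pi1_hom : frame_hom Q TF (pi1 A Q la ra).
Proof.
  unfold pi1. split; tfs.
  - intros P. apply tcar_ext. intros a b. split.
    + apply tens_least. apply mem_id. apply td_supl. apply mem_id.
      intros p Hp. eapply tsup_in. exists p. split. exact Hp. reflexivity. apply tens_in.
    + apply tsup_least. apply mem_id. intros S [p [Hp ->]] x0 y0. apply tens_mono.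
      apply (sup_ub Q HQ); auto. apply (le_refl Q HQ).
  - intros x y. apply tcar_ext. intros a b. rewrite tmeet_iff. split.
    + intros H. split; eapply tens_mono; eauto; try apply (le_refl Q HQ). apply (meet_l Q HQ). apply (meet_r Q HQ).
    + intros [H1 H2]. pose proof (tens_meet _ _ _ _ _ _ H1 H2) as K.
      rewrite (meet_idem Q HQ) in K. exact K.
  - apply tcar_ext. intros a b. split; intros _. apply ttop_in. apply tens_top_all.
Qed.

Lemma pi2_hom : frame_hom Q TF (pi2 A Q la ra).
Proof.
  unfold pi2. split; tfs.
  - intros P. apply tcar_ext. intros a b. split.
    + apply tens_least. apply mem_id. apply td_supr. apply mem_id.
      intros p Hp. eapply tsup_in. exists p. split. exact Hp. reflexivity. apply tens_in.
    + apply tsup_least. apply mem_id. intros S [p [Hp ->]] x0 y0. apply tens_mono.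
      apply (le_refl Q HQ). apply (sup_ub Q HQ); auto.
  - intros x y. apply tcar_ext. intros a b. rewrite tmeet_iff. split.
    + intros H. split; eapply tens_mono; eauto; try apply (le_refl Q HQ). apply (meet_l Q HQ). apply (meet_r Q HQ).
    + intros [H1 H2]. pose proof (tens_meet _ _ _ _ _ _ H1 H2) as K.
      rewrite (meet_idem Q HQ) in K. exact K.
  - apply tcar_ext. intros a b. split; intros _. apply ttop_in. apply tens_top_all.
Qed.

Lemma pi_commute a : pi1 A Q la ra (rstar A Q la inv a) = pi2 A Q la ra (dstar A Q la a).
Proof.
  unfold pi1, pi2, dstar. rewrite rstar_eq. apply tcar_ext. intros x y. split.
  - apply tens_least. apply mem_id. apply (td_bal _ (mem_id _)). apply tens_in.
  - apply tens_least. apply mem_id. apply (td_bal _ (mem_id _)). apply tens_in.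
Qed.

Section Pull.
Variable X : frame_ops.
Hypothesis HX : is_frame X.

Definition hform (f g : Q -> X) (S : T) : X :=
  fsup X (fun z => exists a b, mem S a b /\ z = fmeet X (f a) (g b)).

Lemma meet4 (x y x' y' : X) :
  fmeet X (fmeet X x y) (fmeet X x' y') = fmeet X (fmeet X x x') (fmeet X y y').
Proof.
  rewrite !(meet_assoc X HX). f_equal. rewrite <- !(meet_assoc X HX). f_equal.
  apply meet_comm, HX.
Qed.

Variables (f g : Q -> X).
Hypotheses (Hf : frame_hom Q X f) (Hg : frame_hom Q X g)
  (Hfg : forall a, f (rstar A Q la inv a) = g (dstar A Q la a)).

Lemma RW_ideal W : tid (fun a b => fle X (fmeet X (f a) (g b)) W).
Proof.
  split; [|split; [|split]].
  - intros a b a' b' H Ha Hb. eapply le_trans. exact HX. 2: exact H.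
    apply meet_mono. exact HX. apply (frame_hom_mono Q X f HQ HX Hf); auto.
    apply (frame_hom_mono Q X g HQ HX Hg); auto.
  - intros P b H. rewrite (fh_sup _ _ _ Hf). apply sup_meet_le. exact HX.
    intros p [x [Hx ->]]. auto.
  - intros a P H. rewrite (fh_sup _ _ _ Hg). apply meet_sup_le. exact HX.
    intros p [x [Hx ->]]. auto.
  - intros a c b.
    assert (E : fmeet X (f a) (g (la c b)) = fmeet X (f (ra a c)) (g b)).
    { rewrite <- la_top_meet, <- (ra_top_meet c a), (fh_meet _ _ _ Hf), (fh_meet _ _ _ Hg).
      rewrite <- rstar_eq, Hfg. unfold dstar.
      rewrite <- (meet_assoc X HX), (meet_comm X HX (f a)). try reflexivity; apply (meet_assoc X HX). }
    rewrite E. tauto.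
Qed.

Lemma hform_le S a b : mem S a b -> fle X (fmeet X (f a) (g b)) (hform f g S).
Proof. intros H. apply sup_ub. exact HX. exists a, b. auto. Qed.

Lemma hform_mono (S S' : T) : (forall a b, mem S a b -> mem S' a b) -> fle X (hform f g S) (hform f g S').
Proof. intros H. apply sup_least. exact HX. intros z [a [b [Hab ->]]]. apply hform_le. auto. Qed.

Lemma hform_hom : frame_hom TF X (hform f g).
Proof.
  split; tfs.
  - intros F. apply (le_antisym X HX).
    + apply sup_least. exact HX. intros z [a [b [Hab ->]]].
      refine (tsup_least F _ (RW_ideal _) _ a b Hab).
      intros S HS x y Hxy. eapply le_trans. exact HX. apply hform_le. exact Hxy.
      apply sup_ub. exact HX. exists S. auto.
    + apply sup_least. exact HX. intros z [S [HS ->]]. apply hform_mono.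
      intros a b H. eapply tsup_in; eauto.
  - intros S S'. apply (le_antisym X HX).
    + apply meet_glb. exact HX. apply hform_mono. intros a b H. apply tmeet_iff in H. tauto.
      apply hform_mono. intros a b H. apply tmeet_iff in H. tauto.
    + apply sup_meet_le. exact HX. intros z [a [b [Hab ->]]].
      apply meet_sup_le. exact HX. intros z [a' [b' [Hab' ->]]].
      rewrite meet4, <- (fh_meet _ _ _ Hf), <- (fh_meet _ _ _ Hg). apply hform_le.
      apply tmeet_iff. split; (eapply td_down; [apply mem_id| eassumption | |]);
      (apply (meet_l Q HQ) || apply (meet_r Q HQ)).
  - apply (le_antisym X HX). apply (top_ge X HX).
    rewrite <- (meet_idem X HX (ftop X)). rewrite <- (fh_top _ _ _ Hf) at 1. rewrite <- (fh_top _ _ _ Hg).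
    apply hform_le. apply ttop_in.
Qed.

Lemma hform_pi1 q : hform f g (pi1 A Q la ra q) = f q.
Proof.
  apply (le_antisym X HX).
  - apply sup_least. exact HX. intros z [a [b [Hab ->]]].
    refine (tens_least _ q top (RW_ideal (f q)) _ a b Hab). apply (meet_l X HX).
  - rewrite <- (meet_top_r X HX (f q)). rewrite <- (fh_top _ _ _ Hg). apply hform_le. apply tens_in.
Qed.

Lemma hform_pi2 q : hform f g (pi2 A Q la ra q) = g q.
Proof.
  apply (le_antisym X HX).
  - apply sup_least. exact HX. intros z [a [b [Hab ->]]].
    refine (tens_least _ top q (RW_ideal (g q)) _ a b Hab). apply (meet_r X HX).
  - rewrite <- (meet_top_l X HX (g q)). rewrite <- (fh_top _ _ _ Hf). apply hform_le. apply tens_in.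
Qed.

End Pull.

Lemma decomp X (HX : is_frame X) (h : T -> X) : frame_hom TF X h ->
  forall S, h S = hform X (fun a => h (pi1 A Q la ra a)) (fun b => h (pi2 A Q la ra b)) S.
Proof.
  intros Hh S.
  assert (ES : S = tsup A Q la ra (fun T' => exists a b, mem S a b /\ T' = tens' a b)).
  { apply tcar_ext. intros a b. split.
    - intros H. eapply tsup_in. exists a, b. split. exact H. reflexivity. apply tens_in.
    - apply tsup_least. apply mem_id. intros T' [x [y [Hxy ->]]]. apply tens_least. apply mem_id. exact Hxy. }
  rewrite ES at 1. pose proof (fh_sup _ _ _ Hh) as Hs. unfold sup_pres in Hs. tfs.
  rewrite Hs. unfold hform. apply sup_ext. exact HX. intros z. split.
  - intros [T' [[a [b [Hab ->]]] ->]]. exists a, b. split. exact Hab.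
    rewrite tens_split. pose proof (fh_meet _ _ _ Hh) as Hm. tfs. rewrite Hm. reflexivity.
  - intros [a [b [Hab ->]]]. exists (tens' a b). split. exists a, b. auto.
    rewrite tens_split. pose proof (fh_meet _ _ _ Hh) as Hm. tfs. rewrite Hm. reflexivity.
Qed.

Lemma pullback : is_pullback A Q TF (rstar A Q la inv) (dstar A Q la) (pi1 A Q la ra) (pi2 A Q la ra).
Proof.
  split. exact pi_commute.
  intros X HX f g Hf Hg Hfg. exists (hform X f g). split; [|split; [|split]].
  - apply hform_hom; auto.
  - apply hform_pi1; auto.
  - apply hform_pi2; auto.
  - intros h' Hh' H1 H2 t. rewrite (decomp X HX h' Hh'). unfold hform. apply sup_ext. exact HX.
    intros z. split; intros [a [b [Hab ->]]]; exists a, b; rewrite H1, H2 in *; auto.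
Qed.


Notation mstar' := (mstar A Q la ra mul).
Notation pi1' := (pi1 A Q la ra).
Notation pi2' := (pi2 A Q la ra).

Lemma MI_ideal q : tid (fun x y => le (mul x y) q).
Proof.
  split; [|split; [|split]].
  - intros x y x' y' H Hx Hy. eapply le_trans. exact HQ. 2: exact H. apply mul_mono; auto.
  - intros P y H. rewrite (q_supl _ _ _ _ _ Hq). apply (sup_least Q HQ). intros z [x [Hx ->]]. auto.
  - intros x P H. rewrite (q_supr _ _ _ _ _ Hq). apply (sup_least Q HQ). intros z [y [Hy ->]]. auto.
  - intros x a y. rewrite (q_mid _ _ _ _ _ Hq). tauto.
Qed.

Lemma mstar_mem q x y : mem (mstar' q) x y <-> le (mul x y) q.
Proof.
  unfold mstar. split.
  - intros H. refine (tsup_least _ _ (MI_ideal q) _ x y H).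
    intros S [a [b [Hab ->]]]. apply tens_least. apply MI_ideal. exact Hab.
  - intros H. eapply tsup_in. exists x, y. split. exact H. reflexivity. apply tens_in.
Qed.

Lemma mstar_mu : mstar' = mu_right A Q la ra mul.
Proof.
  apply functional_extensionality. intro q. apply tcar_ext. intros x y. rewrite mstar_mem.
  unfold mu_right. split.
  - intros H. eapply tsup_in. 2: apply tens_in. apply (sup_least Q HQ). intros z [a [b [Hab ->]]].
    refine (tens_least _ x y (MI_ideal q) H a b Hab).
  - intros H0. refine (tsup_least _ _ (MI_ideal q) _ x y H0). intros S HS a b Hab. eapply le_trans. exact HQ. 2: exact HS.
    apply (sup_ub Q HQ). exists a, b. auto.
Qed.

Lemma mstar_hom : frame_hom Q TF mstar'.
Proof.
  split.
  - rewrite mstar_mu. exact Hmult.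
  - intros a b. tfs. apply tcar_ext. intros x y. rewrite tmeet_iff, !mstar_mem. split.
    + intros H. split; (eapply le_trans; [exact HQ|exact H|]); (apply (meet_l Q HQ) || apply (meet_r Q HQ)).
    + intros [H1 H2]. apply meet_glb; auto. exact HQ.
  - tfs. apply tcar_ext. intros x y. rewrite mstar_mem. split; intros _. apply ttop_in. apply (top_ge Q HQ).
Qed.

Lemma d_hom : frame_hom A Q (dstar A Q la).
Proof.
  unfold dstar. split.
  - intro P. apply Hbm.
  - intros a b. rewrite (bm_la_meet _ _ _ _ Hbm), la_top_meet. reflexivity.
  - apply la_one.
Qed.

Lemma inv_hom : frame_hom Q Q inv.
Proof. split. apply Hinv. apply inv_meet. apply inv_top. Qed.

Lemma r_hom : frame_hom A Q (rstar A Q la inv).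
Proof. exact (frame_hom_comp _ _ _ _ _ d_hom inv_hom). Qed.

Section Supp.
Variable sg : Q -> A.
Hypotheses (Hsg : support A Q la mul inv sg) (Heqv : equivariant A Q la sg).

Lemma rsupp z w : le (ra z (sg w)) (mul (mul z w) (inv w)).
Proof.
  pose proof (sp_le _ _ _ _ _ _ Hsg w (inv z)) as H. apply inv_mono in H.
  rewrite inv_la, inv_inv, !inv_mul, !inv_inv in H. rewrite (q_assoc _ _ _ _ _ Hq). exact H.
Qed.

Lemma rfix x : ra x (sg (inv x)) = x.
Proof.
  pose proof (sp_fix _ _ _ _ _ _ Hsg (inv x)) as H. apply (f_equal inv) in H.
  rewrite inv_la, !inv_inv in H. exact H.
Qed.

Lemma dm a : mstar' (dstar A Q la a) = pi1' (dstar A Q la a).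
Proof.
  unfold pi1, dstar. apply tcar_ext. intros x y. rewrite mstar_mem. split.
  - intros H. rewrite <- (sp_fix _ _ _ _ _ _ Hsg y). apply (td_bal _ (mem_id _)).
    eapply td_down. apply mem_id. apply tens_in. 2: apply (top_ge Q HQ).
    eapply le_trans. exact HQ. apply rsupp. eapply le_trans. exact HQ. apply mul_mono_l. exact H.
    rewrite (q_la _ _ _ _ _ Hq). apply la_mono_r, (top_ge Q HQ).
  - intros H0. refine (tens_least _ _ _ (MI_ideal _) _ x y H0). rewrite (q_la _ _ _ _ _ Hq). apply la_mono_r, (top_ge Q HQ).
Qed.

Lemma rm a : mstar' (rstar A Q la inv a) = pi2' (rstar A Q la inv a).
Proof.
  unfold pi2. rewrite rstar_eq. apply tcar_ext. intros x y. rewrite mstar_mem. split.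
  - intros H. rewrite <- (rfix x). apply (td_bal _ (mem_id _)).
    eapply td_down. apply mem_id. apply tens_in. apply (top_ge Q HQ).
    eapply le_trans. exact HQ. apply (sp_le _ _ _ _ _ _ Hsg). rewrite inv_inv.
    rewrite !(q_assoc _ _ _ _ _ Hq). eapply le_trans. exact HQ. apply mul_mono_r. exact H.
    rewrite <- (q_ra _ _ _ _ _ Hq). apply ra_mono_l. apply (top_ge Q HQ).
  - intros H0. refine (tens_least _ _ _ (MI_ideal _) _ x y H0). rewrite <- (q_ra _ _ _ _ _ Hq). apply ra_mono_l, (top_ge Q HQ).
Qed.

Lemma d_open : open_map A Q (dstar A Q la).
Proof.
  exists sg. unfold dstar. split.
  - intros y a. split.
    + intros H. rewrite <- (sp_fix _ _ _ _ _ _ Hsg y). eapply le_trans. exact HQ.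
      apply la_mono_r, (top_ge Q HQ). apply la_mono_l. exact H.
    + intros H. apply (sup_pres_mono Q A sg HQ HA (sp_sup _ _ _ _ _ _ Hsg)) in H.
      rewrite Heqv, (sp_top _ _ _ _ _ _ Hsg), (meet_top_r A HA) in H. exact H.
  - intros y a. rewrite (meet_comm Q HQ), la_top_meet, Heqv. apply meet_comm, HA.
Qed.

End Supp.


Lemma hm X (HX : is_frame X) (h : T -> X) (f g : Q -> X) : frame_hom TF X h ->
  (forall q, h (pi1' q) = f q) -> (forall q, h (pi2' q) = g q) ->
  forall q, h (mstar' q) = fsup X (fun w => exists a b, le (mul a b) q /\ w = fmeet X (f a) (g b)).
Proof.
  intros Hh H1 H2 q. rewrite (decomp X HX h Hh). unfold hform. apply sup_ext. exact HX.
  intro w. split; intros [a [b [H ->]]]; exists a, b; rewrite ?H1, ?H2, ?mstar_mem in *; auto.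
Qed.

Lemma unit_r_law q : fsup Q (fun w => exists a b, le (mul a b) q /\ w = ra a (ups b)) = q.
Proof.
  set (P := fun w => exists a b, le (mul a b) q /\ w = ra a (ups b)).
  assert (E : inv (fsup Q P) = inv q).
  { rewrite (inv_sup _ _ _ _ _ _ Hinv). rewrite <- (Hunit (inv q)). apply sup_ext. exact HQ.
    intro w. split.
    - intros [v [[a [b [H ->]]] ->]]. exists (inv b), (inv a). split.
      + rewrite <- inv_mul. apply inv_mono. exact H.
      + rewrite inv_ra, ups_inv. reflexivity.
    - intros [c [d [H ->]]]. exists (ra (inv d) (ups (inv c))). split.
      + exists (inv d), (inv c). split; auto. rewrite <- inv_mul. apply inv_le_l. exact H.
      + rewrite inv_ra, inv_inv, ups_inv. reflexivity. }
  rewrite <- (inv_inv (fsup Q P)), E. apply inv_inv.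
Qed.

Lemma lem_unit_l X (HX : is_frame X) (x : Q -> X) (Hx : frame_hom Q X x) (h : T -> X) (Hh : frame_hom TF X h)
  (H1 : forall q, h (pi1' q) = x (dstar A Q la (ups q))) (H2 : forall q, h (pi2' q) = x q) q :
  h (mstar' q) = x q.
Proof.
  rewrite (hm X HX h _ _ Hh H1 H2). transitivity (x (fsup Q (fun z => exists x0 y0, le (mul x0 y0) q /\ z = la (ups x0) y0))).
  2: now rewrite (Hunit q). rewrite (fh_sup _ _ _ Hx).
  apply sup_ext. exact HX. intro w. unfold dstar. split.
  - intros [a [b [H ->]]]. exists (la (ups a) b). split. exists a, b. auto.
    rewrite <- (fh_meet _ _ _ Hx), la_top_meet. reflexivity.
  - intros [v [[a [b [H ->]]] ->]]. exists a, b. split. auto.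
    rewrite <- (fh_meet _ _ _ Hx), la_top_meet. reflexivity.
Qed.

Lemma lem_unit_r X (HX : is_frame X) (x : Q -> X) (Hx : frame_hom Q X x) (h : T -> X) (Hh : frame_hom TF X h)
  (H1 : forall q, h (pi1' q) = x q) (H2 : forall q, h (pi2' q) = x (rstar A Q la inv (ups q))) q :
  h (mstar' q) = x q.
Proof.
  rewrite (hm X HX h _ _ Hh H1 H2). transitivity (x (fsup Q (fun w => exists a b, le (mul a b) q /\ w = ra a (ups b)))).
  2: now rewrite (unit_r_law q). rewrite (fh_sup _ _ _ Hx).
  apply sup_ext. exact HX. intro w. split.
  - intros [a [b [H ->]]]. exists (ra a (ups b)). split. exists a, b. auto.
    rewrite <- (fh_meet _ _ _ Hx), rstar_eq, (meet_comm Q HQ), ra_top_meet. reflexivity.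
  - intros [v [[a [b [H ->]]] ->]]. exists a, b. split. auto.
    rewrite <- (fh_meet _ _ _ Hx), rstar_eq, (meet_comm Q HQ), ra_top_meet. reflexivity.
Qed.

Lemma lem_inv_r X (HX : is_frame X) (x : Q -> X) (Hx : frame_hom Q X x) (h : T -> X) (Hh : frame_hom TF X h)
  (H1 : forall q, h (pi1' q) = x q) (H2 : forall q, h (pi2' q) = x (inv q)) q :
  h (mstar' q) = x (dstar A Q la (ups q)).
Proof.
  rewrite (hm X HX h _ _ Hh H1 H2). unfold dstar. rewrite Hinvlaw, (fh_sup _ _ _ Hx).
  apply sup_ext. exact HX. intro w. split.
  - intros [a [b [H ->]]]. exists (meet a (inv b)). split. exists a, (inv b). rewrite inv_inv. auto.
    rewrite (fh_meet _ _ _ Hx). reflexivity.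
  - intros [v [[a [b [H ->]]] ->]]. exists a, (inv b). split. auto.
    rewrite inv_inv, (fh_meet _ _ _ Hx). reflexivity.
Qed.

Lemma lem_inv_l X (HX : is_frame X) (x : Q -> X) (Hx : frame_hom Q X x) (h : T -> X) (Hh : frame_hom TF X h)
  (H1 : forall q, h (pi1' q) = x (inv q)) (H2 : forall q, h (pi2' q) = x q) q :
  h (mstar' q) = x (rstar A Q la inv (ups q)).
Proof.
  rewrite (hm X HX h _ _ Hh H1 H2). unfold rstar, dstar.
  rewrite Hinvlaw, (inv_sup _ _ _ _ _ _ Hinv), (fh_sup _ _ _ Hx).
  apply sup_ext. exact HX. intro w. split.
  - intros [a [b [H ->]]]. exists (inv (meet a (inv b))). split.
    + exists (meet a (inv b)). split; auto. exists a, (inv b). rewrite inv_inv. auto.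
    + rewrite inv_meet, inv_inv, (fh_meet _ _ _ Hx). reflexivity.
  - intros [v [[u [[c [d [H ->]]] ->]] ->]]. exists c, (inv d). split. auto.
    rewrite inv_meet, (fh_meet _ _ _ Hx). reflexivity.
Qed.

Lemma lem_assoc X (HX : is_frame X) (x y z : Q -> X)
  (Hx : frame_hom Q X x) (Hy : frame_hom Q X y) (Hz : frame_hom Q X z)
  (h1 h2 h3 h4 : T -> X) (Hh1 : frame_hom TF X h1) (Hh2 : frame_hom TF X h2)
  (Hh3 : frame_hom TF X h3) (Hh4 : frame_hom TF X h4)
  (E11 : forall q, h1 (pi1' q) = x q) (E12 : forall q, h1 (pi2' q) = y q)
  (E21 : forall q, h2 (pi1' q) = y q) (E22 : forall q, h2 (pi2' q) = z q)
  (E31 : forall q, h3 (pi1' q) = h1 (mstar' q)) (E32 : forall q, h3 (pi2' q) = z q)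
  (E41 : forall q, h4 (pi1' q) = x q) (E42 : forall q, h4 (pi2' q) = h2 (mstar' q)) q :
  h3 (mstar' q) = h4 (mstar' q).
Proof.
  rewrite (hm X HX h3 _ _ Hh3 E31 E32), (hm X HX h4 _ _ Hh4 E41 E42).
  apply (le_antisym X HX).
  - apply (sup_least X HX). intros w [a [b [H ->]]].
    rewrite (hm X HX h1 _ _ Hh1 E11 E12). apply (sup_meet_le X HX).
    intros p [c [d [Hcd ->]]]. rewrite (meet_assoc X HX).
    eapply (le_trans X HX). refine (meet_mono X HX (x c) (x c) _ (h2 (mstar' (mul d b))) _ _). apply (le_refl X HX).
    rewrite (hm X HX h2 _ _ Hh2 E21 E22). apply (sup_ub X HX). exists d, b. split. apply (le_refl Q HQ). reflexivity.
    apply (sup_ub X HX). exists c, (mul d b). split; auto.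
    rewrite <- (q_assoc _ _ _ _ _ Hq). eapply (le_trans Q HQ). apply mul_mono_l. exact Hcd. exact H.
  - apply (sup_least X HX). intros w [a [b [H ->]]].
    rewrite (hm X HX h2 _ _ Hh2 E21 E22). apply (meet_sup_le X HX).
    intros p [c [d [Hcd ->]]]. rewrite <- (meet_assoc X HX).
    eapply (le_trans X HX). refine (meet_mono X HX _ (h1 (mstar' (mul a c))) (z d) (z d) _ _). 2: apply (le_refl X HX).
    rewrite (hm X HX h1 _ _ Hh1 E11 E12). apply (sup_ub X HX). exists a, c. split. apply (le_refl Q HQ). reflexivity.
    apply (sup_ub X HX). exists (mul a c), d. split; auto.
    rewrite (q_assoc _ _ _ _ _ Hq). eapply (le_trans Q HQ). apply mul_mono_r. exact Hcd. exact H.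
Qed.

Lemma main_in : open_localic_groupoid A Q TF (dstar A Q la) (rstar A Q la inv) ups inv
    mstar' pi1' pi2'.
Proof.
  pose proof HG as HG'. destruct HG' as [_ [_ [[sg [Hsg Heqv]] _]]].
  split; [|exact (d_open sg Hsg Heqv)].
  split.
  - exact HA.
  - exact HQ.
  - exact tframe.
  - exact d_hom.
  - exact r_hom.
  - exact (proj1 Hrefl).
  - exact inv_hom.
  - exact mstar_hom.
  - exact pi1_hom.
  - exact pi2_hom.
  - exact pullback.
  - exact ups_la.
  - intro a. unfold rstar, dstar. rewrite ups_inv. apply ups_la.
  - exact inv_inv.
  - intro a. reflexivity.
  - exact (dm sg Hsg).
  - exact (rm sg Hsg).
  - exact lem_assoc.
  - exact lem_unit_l.
  - exact lem_unit_r.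
  - exact lem_inv_r.
  - exact lem_inv_l.
Qed.

End Main.

Theorem theorem5p6 (A Q : frame_ops) (la : A -> Q -> Q) (ra : Q -> A -> Q)
    (mul : Q -> Q -> Q) (inv : Q -> Q) (ups : Q -> A) :
  groupoid_quantale A Q la ra mul inv ups ->
  open_localic_groupoid A Q (tensor_frame A Q la ra)
    (dstar A Q la) (rstar A Q la inv) ups inv
    (mstar A Q la ra mul) (pi1 A Q la ra) (pi2 A Q la ra).
Proof. intro H. exact (main_in A Q la ra mul inv ups H). Qed.
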